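(* Let $(X,\mathcal{B},\mu,G)$ be a measure-preserving system and $S\subset G$. Then the map $\mathfrak{P}\to[0,\infty)$, $\alpha\mapsto h^*_{\mu,S}(\alpha)$, is continuous with respect to the Rokhlin metric $\rho$. In particular, $\{\alpha\in\mathfrak{P}\colon h^*_{\mu,S}(\alpha)=0\}$ is closed in $(\mathfrak{P},\rho)$.
   Context: $(X,\mathcal{B},\mu)$ is a standard probability space and the discrete group $G$ acts measurably and preserves $\mu$. $\mathfrak{P}$ is the set of finite measurable partitions of $X$ (identified mod $0$); $g^{-1}\alpha=\{g^{-1}A\colon A\in\alpha\}$. $H_\mu(\alpha)=-\sum_{A\in\alpha}\mu(A)\log\mu(A)$, $H_\mu(\alpha|\beta)=\sum_{B\in\beta}\mu(B)\sum_{A\in\alpha}-\mu(A|B)\log\mu(A|B)$ with $\mu(A|B)=\mu(A\cap B)/\mu(B)$ ($0$ if $\mu(B)=0$); $\rho(\alpha,\beta)=H_\mu(\alpha|\beta)+H_\mu(\beta|\alpha)$. $h^*_{\mu,S}(\alpha)=\limsup_n\frac1n\sup_{\alpha_1,\dots,\alpha_n\in\{g^{-1}\alpha\colon g\in S\}}H_\mu(\bigvee_{i=1}^n\alpha_i)$. *)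

(* Defs.v *)
From HB Require Import structures.
From mathcomp Require Import all_boot all_order all_algebra.
From mathcomp Require Import all_classical all_reals all_analysis.

Set Implicit Arguments.
Unset Strict Implicit.
Unset Printing Implicit Defensive.
Import Order.TTheory GRing.Theory Num.Theory.

Local Open Scope classical_set_scope.
Local Open Scope ring_scope.

Section Entropy.
Context {d : measure_display} {T : measurableType d} {R : realType}.
Variable mu : probability T R.

(** A finite measurable partition of T, given as a finite list of blocks
    (empty blocks allowed; they do not affect any of the quantities below). *)
Definition is_partition (a : seq (set T)) : Prop :=
  [/\ forall i, (i < size a)%N -> measurable (nth set0 a i),
      (forall i j, (i < size a)%N -> (j < size a)%N -> i <> j ->
         nth set0 a i `&` nth set0 a j = set0)
    & \big[setU/set0]_(A <- a) A = setT].

Definition rmu (A : set T) : R := fine (mu A).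

Definition eta (x : R) : R := if x == 0 then 0 else - (x * ln x).

Definition Hent (a : seq (set T)) : R := \sum_(A <- a) eta (rmu A).

Definition cmu (A B : set T) : R :=
  if rmu B == 0 then 0 else rmu (A `&` B) / rmu B.

Definition Hcond (a b : seq (set T)) : R :=
  \sum_(B <- b) rmu B * \sum_(A <- a) eta (cmu A B).

Definition rokhlin (a b : seq (set T)) : R := Hcond a b + Hcond b a.

Definition pjoin (a b : seq (set T)) : seq (set T) :=
  [seq A `&` B | A <- a, B <- b].

End Entropy.

Section Action.
Context {d : measure_display} {T : measurableType d} {R : realType}.
Context {G : groupType}.

Definition mp_action (mu : probability T R) (act : G -> T -> T) : Prop :=
  [/\ forall x, act 1%g x = x,
      forall g h x, act (g * h)%g x = act g (act h x),
      forall g, measurable_fun setT (act g)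
    & forall g A, measurable A -> mu (act g @^-1` A) = mu A].

(** g^{-1} alpha = { g^{-1} A : A in alpha }, where g^{-1}A = {x | g x ∈ A} *)
Definition ptrans (act : G -> T -> T) (g : G) (a : seq (set T)) : seq (set T) :=
  [seq act g @^-1` A | A <- a].

Definition Hjoins (mu : probability T R) (act : G -> T -> T) (S : set G)
    (a : seq (set T)) (n : nat) : set R :=
  [set Hent mu (\big[pjoin/[:: setT]]_(i < n) ptrans act (gs i) a)
     | gs in [set gs : 'I_n -> G | forall i, S (gs i)]].

Definition hstar (mu : probability T R) (act : G -> T -> T) (S : set G)
    (a : seq (set T)) : R :=
  limn_sup (fun n : nat => n%:R^-1 * sup (Hjoins mu act S a n)).

End Action.

(* Main.v *)
Require Import Defs.
From HB Require Import structures.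
From mathcomp Require Import all_boot all_order all_algebra.
From mathcomp Require Import all_classical all_reals all_analysis.
From mathcomp Require Import ring lra.
Import Order.TTheory GRing.Theory Num.Theory.
Local Open Scope classical_set_scope.
Local Open Scope ring_scope.

Local Notation eta := Defs.eta.
Section RealPart.
Variable R : realType.

Lemma etaE (x : R) : eta x = - (x * ln x).
Proof. unfold Defs.eta. by have [->|h] := eqVneq x 0; rewrite ?mul0r ?oppr0. Qed.

Lemma sum_ge_mem (I : eqType) (r : seq I) (F : I -> R) x :
  x \in r -> (forall y, 0 <= F y) -> F x <= \sum_(y <- r) F y.
Proof.
move=> xr F0; rewrite (big_rem x xr) /= lerDl; exact: sumr_ge0.
Qed.

Lemma ln_le_sub1 (w : R) : 0 < w -> ln w <= w - 1.
Proof.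
move=> w0; have h := @le_ln1Dx R (w - 1).
have e : 1 + (w - 1) = w by ring.
rewrite e in h; apply: h; lra.
Qed.

Lemma eta_subadd (I : eqType) (r : seq I) (q : I -> R) :
  (forall i, 0 <= q i) -> eta (\sum_(i <- r) q i) <= \sum_(i <- r) eta (q i).
Proof.
move=> q0; set t := \sum_(i <- r) q i.
rewrite etaE; under eq_bigr do rewrite etaE.
rewrite sumrN lerN2 /t mulr_suml big_seq [X in _ <= X]big_seq.
apply: ler_sum => i ir.
have [->|qn0] := eqVneq (q i) 0; first by rewrite !mul0r.
have qp : 0 < q i by rewrite lt_def qn0 q0.
apply: ler_wpM2l; first exact: q0.
have qt : q i <= t by exact: sum_ge_mem.
by rewrite ler_ln // posrE // (lt_le_trans qp qt).
Qed.

Lemma mi_ineq (I J : eqType) (ri : seq I) (rj : seq J) (p : I -> J -> R) :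
  (forall i j, 0 <= p i j) ->
  \sum_(i <- ri) \sum_(j <- rj) eta (p i j)
    + eta (\sum_(i <- ri) \sum_(j <- rj) p i j)
  <= \sum_(i <- ri) eta (\sum_(j <- rj) p i j)
     + \sum_(j <- rj) eta (\sum_(i <- ri) p i j).
Proof.
move=> p0.
pose r i := \sum_(j <- rj) p i j.
pose s j := \sum_(i <- ri) p i j.
pose t := \sum_(i <- ri) r i.
have r0 i : 0 <= r i by apply: sumr_ge0.
have s0 j : 0 <= s j by apply: sumr_ge0.
have t0 : 0 <= t by apply: sumr_ge0.
have ts : t = \sum_(j <- rj) s j by rewrite /t /r exchange_big.
pose f i j := p i j * ln (p i j) + p i j * ln t - p i j * ln (r i)
              - p i j * ln (s j).
have key : \sum_(i <- ri) \sum_(j <- rj) f i j =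
   \sum_(i <- ri) \sum_(j <- rj) (p i j * ln (p i j)) + t * ln t
   - \sum_(i <- ri) r i * ln (r i) - \sum_(j <- rj) s j * ln (s j).
  rewrite /f.
  under eq_bigr do rewrite !sumrB !big_split /=.
  rewrite !sumrB !big_split /=.
  congr (_ + _ - _ - _).
  - by rewrite /t mulr_suml; apply: eq_bigr => i _; rewrite /r mulr_suml.
  - by apply: eq_bigr => i _; rewrite /r mulr_suml.
  - by rewrite exchange_big /=; apply: eq_bigr => j _; rewrite /s mulr_suml.
have fge : 0 <= \sum_(i <- ri) \sum_(j <- rj) f i j.
  have mem_le i j : i \in ri -> j \in rj -> p i j <= r i /\ p i j <= s j /\ r i <= t.
    move=> ii jj; split; first by apply: sum_ge_mem.
    split; first by apply: (@sum_ge_mem _ _ (fun i => p i j)).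
    exact: sum_ge_mem.
  have [t0'|tp] := eqVneq t 0.
    rewrite big_seq big1 // => i ii; rewrite big_seq big1 // => j jj.
    have [h1 [h2 h3]] := mem_le i j ii jj.
    rewrite /f; have -> : p i j = 0 by apply/eqP; rewrite eq_le p0 andbT -t0' (le_trans h1).
    by rewrite /f !mul0r !subr0 addr0.
  have tpos : 0 < t by rewrite lt_def tp t0.
  have term i j : i \in ri -> j \in rj -> t * p i j - r i * s j <= t * f i j.
    move=> ii jj; have [h1 [h2 h3]] := mem_le i j ii jj.
    have [pz|pn0] := eqVneq (p i j) 0.
      rewrite /f pz !mul0r !subr0 addr0 mulr0 sub0r oppr_le0; exact: mulr_ge0.
    have pp : 0 < p i j by rewrite lt_def pn0 p0.
    have rp : 0 < r i by exact: lt_le_trans h1.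
    have sp : 0 < s j by exact: lt_le_trans h2.
    have w0 : 0 < r i * s j / (p i j * t) by rewrite divr_gt0 ?mulr_gt0.
    have := @ln_le_sub1 _ w0.
    rewrite ln_div ?posrE ?mulr_gt0 // !lnM ?posrE //.
    move=> H.
    have H2 := ler_wpM2l (ltW pp) H.
    have E : p i j * (r i * s j / (p i j * t) - 1) = r i * s j / t - p i j.
      by field; rewrite pn0 tp.
    rewrite E in H2.
    have H3 := ler_wpM2l (ltW tpos) H2.
    have E2 : t * (r i * s j / t - p i j) = r i * s j - t * p i j.
      by field; rewrite tp.
    rewrite E2 in H3.
    rewrite /f; move: H3; set a := ln (p i j); set b := ln t; set c := ln (r i);
      set e := ln (s j).
    move=> H3.
    have : t * (p i j * (c + e - (a + b))) = t * (p i j * c + p i j * e - p i j * a - p i j * b) by ring.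
    move=> E3; rewrite E3 in H3.
    have : t * (p i j * a + p i j * b - p i j * c - p i j * e) = - (t * (p i j * c + p i j * e - p i j * a - p i j * b)) by ring.
    move=> ->; lra.
  have sumterm : \sum_(i <- ri) \sum_(j <- rj) (t * p i j - r i * s j)
      <= t * \sum_(i <- ri) \sum_(j <- rj) f i j.
    rewrite mulr_sumr big_seq [X in _ <= X]big_seq; apply: ler_sum => i ii.
    rewrite mulr_sumr big_seq [X in _ <= X]big_seq; apply: ler_sum => j jj.
    exact: term.
  have zero : \sum_(i <- ri) \sum_(j <- rj) (t * p i j - r i * s j) = 0.
    under eq_bigr do rewrite sumrB -mulr_sumr -mulr_sumr.
    rewrite sumrB -mulr_sumr -/t.
    under eq_bigr do rewrite -/(r _).
    rewrite -mulr_suml -/t -ts; by rewrite subrr.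
  rewrite zero in sumterm.
  by rewrite -(pmulr_rge0 _ tpos).
rewrite key in fge.
rewrite !etaE; under eq_bigr do (under eq_bigr do rewrite etaE).
under [X in _ <= X + _]eq_bigr do rewrite etaE.
under [X in _ <= _ + X]eq_bigr do rewrite etaE.
rewrite -/t.
have e1 : \sum_(i <- ri) \sum_(j <- rj) - (p i j * ln (p i j)) =
   - \sum_(i <- ri) \sum_(j <- rj) (p i j * ln (p i j)).
  by rewrite -sumrN; apply: eq_bigr => i _; rewrite sumrN.
rewrite e1.
rewrite [X in _ <= X + _](eq_bigr (fun i => - (r i * ln (r i)))) // sumrN.
rewrite [X in _ <= _ + X](eq_bigr (fun j => - (s j * ln (s j)))) // sumrN.
lra.
Qed.

Lemma limn_sup_le (u w : R^o^nat) : bounded_fun u -> bounded_fun w ->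
  (forall n, u n <= w n) -> limn_sup u <= limn_sup w.
Proof.
move=> bu bw uw; rewrite /limn_sup; apply: ler_lim.
- apply: nonincreasing_is_cvgn; last exact: bounded_fun_has_lbound_sups.
  exact/nonincreasing_sups/bounded_fun_has_ubound.
- apply: nonincreasing_is_cvgn; last exact: bounded_fun_has_lbound_sups.
  exact/nonincreasing_sups/bounded_fun_has_ubound.
- apply: nearW => k; apply: ge_sup; first by exists (u k); exists k => /=.
  move=> _ [m /= km <-]; apply: le_trans (uw m) _; apply: ub_le_sup; last by exists m.
  exact/has_ubound_sdrop/bounded_fun_has_ubound.
Qed.

Lemma bounded_of (u : R^o^nat) (M : R) : (forall n, `|u n| <= M) -> bounded_fun u.
Proof.
move=> hM; rewrite /= /bounded_near; near=> K => n _ /=.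
apply: le_trans (hM n) _; near: K; apply: nbhs_pinfty_ge; exact: num_real.
Unshelve. all: end_near. Qed.

Lemma limn_sup_cst (c : R) : limn_sup (fun _ : nat => c) = c.
Proof.
rewrite cvg_limn_supE; last exact: is_cvg_cst.
exact: lim_cst.
Qed.
End RealPart.

Section MeasPart.
Context (R : realType) (d : measure_display) (T : measurableType d)
  (mu : probability T R).
Local Notation rmu := (Defs.rmu mu).
Local Notation Hent := (Defs.Hent mu).

Ltac seteq := apply/seteqP; split => w; rewrite /setI /=; tauto.

Lemma rmu_ge0 A : 0 <= rmu A.
Proof. exact/fine_ge0/measure_ge0. Qed.

Lemma rmuE A : measurable A -> mu A = (rmu A)%:E.
Proof. by move=> mA; rewrite /Defs.rmu fineK //; apply: fin_num_measure. Qed.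

Lemma rmu0 : rmu set0 = 0.
Proof. by rewrite /Defs.rmu measure0. Qed.

Lemma rmuT : rmu setT = 1.
Proof. by rewrite /Defs.rmu probability_setT. Qed.

Lemma rmuU A B : measurable A -> measurable B -> A `&` B = set0 ->
  rmu (A `|` B) = rmu A + rmu B.
Proof.
move=> mA mB AB; have := measureU mu mA mB AB.
by move=> h; rewrite /Defs.rmu h fineD //; apply: fin_num_measure.
Qed.

Lemma eta0 : eta (0 : R) = 0.
Proof. by rewrite etaE mul0r oppr0. Qed.

Lemma eta1 : eta (1 : R) = 0.
Proof. by rewrite etaE ln1 mulr0 oppr0. Qed.

Definition good (z : seq (set T)) :=
  (forall Z, Z \in z -> measurable Z) /\
  (forall A, measurable A -> \sum_(Z <- z) rmu (A `&` Z) = rmu A).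

Lemma bigU_meas (z : seq (set T)) : (forall Z, Z \in z -> measurable Z) ->
  measurable (\big[setU/set0]_(Z <- z) Z).
Proof.
elim: z => [|Z z IH] h; rewrite ?big_nil ?big_cons; first exact: measurable0.
apply: measurableU; first by apply: h; rewrite mem_head.
by apply: IH => Y Yz; apply: h; rewrite in_cons Yz orbT.
Qed.

Lemma list_add (z : seq (set T)) :
  (forall i, (i < size z)%N -> measurable (nth set0 z i)) ->
  (forall i j, (i < size z)%N -> (j < size z)%N -> i <> j ->
     nth set0 z i `&` nth set0 z j = set0) ->
  forall A, measurable A ->
  \sum_(Z <- z) rmu (A `&` Z) = rmu (A `&` \big[setU/set0]_(Z <- z) Z).
Proof.
elim: z => [|Z z IH] hm hd A mA.
  by rewrite !big_nil setI0 rmu0.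
rewrite !big_cons IH //; last 2 first.
- by move=> i iz; exact: (hm i.+1).
- by move=> i j iz jz ij; apply: (hd i.+1 j.+1) => // -[] /ij.
have mZ : measurable Z by exact: (hm 0%N).
have mem_meas Y : Y \in z -> measurable Y.
  move=> Yz; rewrite -(nth_index set0 Yz); apply: (hm (index Y z).+1).
  by rewrite /= ltnS index_mem.
have mU := bigU_meas _ mem_meas.
have disj : Z `&` \big[setU/set0]_(Y <- z) Y = set0.
  rewrite big_seq; apply: (big_ind (fun U => Z `&` U = set0)).
  - exact: setI0.
  - by move=> U V hU hV; rewrite setIUr hU hV setU0.
  - move=> Y Yz; rewrite -(nth_index set0 Yz).
    by apply: (hd 0%N (index Y z).+1) => //=; rewrite ltnS index_mem.
rewrite setIUr rmuU //; [exact: measurableI | exact: measurableI |].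
by rewrite setIACA setIid disj setI0.
Qed.

Lemma part_good z : is_partition z -> good z.
Proof.
case=> hm hd hc; split.
- by move=> Y Yz; rewrite -(nth_index set0 Yz); apply: hm; rewrite index_mem.
- by move=> A mA; rewrite list_add // hc setIT.
Qed.

Lemma sum_pjoin (x y : seq (set T)) (F : set T -> R) :
  \sum_(W <- pjoin x y) F W = \sum_(X <- x) \sum_(Y <- y) F (X `&` Y).
Proof. by rewrite /pjoin big_allpairs_dep. Qed.

Lemma pjoin_good x y : good x -> good y -> good (pjoin x y).
Proof.
move=> [xm xs] [ym ys]; split.
- move=> Z /allpairsP [[X Y] [/= Xx Yy ->]].
  by apply: measurableI; [exact: xm | exact: ym].
- move=> A mA; rewrite sum_pjoin -(xs A mA); apply: eq_big_seq => X Xx.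
  under eq_bigr do rewrite setIA.
  by apply: ys; apply: measurableI => //; exact: xm.
Qed.

Lemma good_setT : good [:: setT].
Proof.
split; first by move=> Z; rewrite mem_seq1 => /eqP ->; exact: measurableT.
by move=> A mA; rewrite big_seq1 setIT.
Qed.

Lemma ssa x y z : good x -> good y -> good z ->
  Hent (pjoin (pjoin x y) z) + Hent y <= Hent (pjoin x y) + Hent (pjoin y z).
Proof.
move=> [xm xs] [ym ys] [zm zs].
rewrite /Defs.Hent !sum_pjoin.
rewrite [X in X + _ <= _]exchange_big [X in _ <= X + _]exchange_big /=.
rewrite -!big_split /= big_seq [X in _ <= X]big_seq; apply: ler_sum => Y Yy.
have row : \sum_(X <- x) eta (\sum_(Z <- z) rmu (X `&` Y `&` Z)) =
           \sum_(X <- x) eta (rmu (X `&` Y)).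
  apply: eq_big_seq => X Xx; rewrite zs //.
  by apply: measurableI; [exact: xm | exact: ym].
have col : \sum_(Z <- z) eta (\sum_(X <- x) rmu (X `&` Y `&` Z)) =
           \sum_(Z <- z) eta (rmu (Y `&` Z)).
  apply: eq_big_seq => Z Zz.
  rewrite -(xs (Y `&` Z)); last by apply: measurableI; [exact: ym | exact: zm].
  by congr eta; apply: eq_bigr => X _; congr rmu; seteq.
have tot : \sum_(X <- x) \sum_(Z <- z) rmu (X `&` Y `&` Z) = rmu Y.
  rewrite -(xs Y (ym Y Yy)); apply: eq_big_seq => X Xx.
  rewrite zs; first by congr rmu; seteq.
  by apply: measurableI; [exact: xm | exact: ym].
have := @mi_ineq R _ _ x z (fun X Z => rmu (X `&` Y `&` Z)) (fun _ _ => rmu_ge0 _).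
by rewrite row col tot.
Qed.

Lemma mono x y : good x -> good y -> Hent x <= Hent (pjoin x y).
Proof.
move=> [xm xs] [ym ys].
rewrite /Defs.Hent sum_pjoin big_seq [X in _ <= X]big_seq; apply: ler_sum => X Xx.
rewrite -(ys X (xm X Xx)); apply: eta_subadd => ?; exact: rmu_ge0.
Qed.

Lemma Hent_pjoinC x y : Hent (pjoin x y) = Hent (pjoin y x).
Proof.
rewrite /Defs.Hent !sum_pjoin exchange_big /=.
by apply: eq_bigr => Y _; apply: eq_bigr => X _; rewrite setIC.
Qed.

Lemma Hent_ge0 x : good x -> 0 <= Hent x.
Proof.
move=> gx; have := mono _ _ good_setT gx.
rewrite /Defs.Hent sum_pjoin !big_seq1 rmuT eta1.
by under eq_bigr do rewrite setTI.
Qed.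

Lemma Hcond_chain a b : good a -> good b ->
  Hcond mu a b = Hent (pjoin a b) - Hent b.
Proof.
move=> [am as_] [bm bs].
rewrite /Defs.Hcond /Defs.Hent sum_pjoin exchange_big /= -sumrB.
apply: eq_big_seq => B Bb.
have sumA : \sum_(A <- a) rmu (A `&` B) = rmu B.
  by rewrite -(as_ B (bm B Bb)); apply: eq_bigr => A _; rewrite setIC.
have [m0|mn0] := eqVneq (rmu B) 0.
  rewrite m0 mul0r eta0.
  have z A : A \in a -> rmu (A `&` B) = 0.
    move=> Aa; apply/eqP; rewrite eq_le rmu_ge0 andbT -m0 -sumA.
    by apply: (@sum_ge_mem _ _ _ (fun A => rmu (A `&` B))) => // ?; exact: rmu_ge0.
  by rewrite subr0 big_seq big1 // => A Aa; rewrite z // eta0.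
have mp : 0 < rmu B by rewrite lt_def mn0 rmu_ge0.
rewrite mulr_sumr.
have per A : rmu B * eta (cmu mu A B) = eta (rmu (A `&` B)) + rmu (A `&` B) * ln (rmu B).
  rewrite /Defs.cmu (negPf mn0).
  have [p0|pn0] := eqVneq (rmu (A `&` B)) 0.
    by rewrite p0 mul0r eta0 mulr0 mul0r addr0.
  have pp : 0 < rmu (A `&` B) by rewrite lt_def pn0 rmu_ge0.
  rewrite !etaE ln_div ?posrE //.
  by field; rewrite mn0.
rewrite (eq_bigr _ (fun A _ => per A)) big_split /= -mulr_suml sumA etaE.
by rewrite opprK.
Qed.

Lemma Hcond_ge0 a b : good a -> good b -> 0 <= Hcond mu a b.
Proof.
move=> ga gb; rewrite Hcond_chain // subr_ge0 Hent_pjoinC; exact: mono.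
Qed.


Context (G : groupType) (act : G -> T -> T).
Hypothesis mp : mp_action mu act.

Definition BJ n (F : 'I_n -> seq (set T)) := \big[pjoin/[:: setT]]_(i < n) F i.
Arguments BJ {n}.

Lemma preimage_bigU (f : T -> T) (z : seq (set T)) :
  \big[setU/set0]_(A <- z) f @^-1` A = f @^-1` (\big[setU/set0]_(A <- z) A).
Proof.
by elim: z => [|A z IH]; rewrite ?big_nil ?big_cons ?preimage_set0 // IH preimage_setU.
Qed.

Lemma ptrans_part g z : is_partition z -> is_partition (ptrans act g z).
Proof.
case: mp => _ _ actm _; case=> hm hd hc; split.
- move=> i; rewrite size_map => iz; rewrite (nth_map set0) //.
  by have := actm g measurableT _ (hm i iz); rewrite setTI.
- move=> i j; rewrite size_map => iz jz ij; rewrite !(nth_map set0) //.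
  by rewrite -preimage_setI hd // preimage_set0.
- by rewrite /ptrans big_map preimage_bigU hc preimage_setT.
Qed.

Lemma part_meas (z : seq (set T)) Z : is_partition z -> Z \in z -> measurable Z.
Proof. by move=> /part_good[h _]; apply: h. Qed.

Lemma Hent_ptrans g z : is_partition z -> Hent (ptrans act g z) = Hent z.
Proof.
case: mp => _ _ _ mpres => pz.
rewrite /Defs.Hent /ptrans big_map; apply: eq_big_seq => A Az.
by rewrite /Defs.rmu mpres //; exact: part_meas pz Az.
Qed.

Lemma Hent_pjoin_ptrans g a b : is_partition a -> is_partition b ->
  Hent (pjoin (ptrans act g a) (ptrans act g b)) = Hent (pjoin a b).
Proof.
case: mp => _ _ _ mpres => pa pb.
rewrite /Defs.Hent !sum_pjoin /ptrans big_map; apply: eq_big_seq => A Aa.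
rewrite big_map; apply: eq_big_seq => B Bb.
rewrite -preimage_setI /Defs.rmu mpres //.
by apply: measurableI; [exact: part_meas pa Aa | exact: part_meas pb Bb].
Qed.

Lemma BJ_good n (F : 'I_n -> seq (set T)) : (forall i, good (F i)) -> good (BJ F).
Proof.
move=> hF; rewrite /BJ; apply: (big_ind good); first exact: good_setT.
- by move=> x y; exact: pjoin_good.
- by move=> i _; exact: hF.
Qed.

Lemma swap4 (A a B b : seq (set T)) :
  Hent (pjoin (pjoin A a) (pjoin B b)) = Hent (pjoin (pjoin a b) (pjoin A B)).
Proof.
rewrite /Defs.Hent !sum_pjoin.
under eq_bigr do under eq_bigr do rewrite sum_pjoin.
under [RHS]eq_bigr do under eq_bigr do rewrite sum_pjoin.
rewrite exchange_big /=.
under eq_bigr => a0 _ do under eq_bigr => A0 _ do rewrite exchange_big.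
under eq_bigr => a0 _ do rewrite exchange_big.
apply: eq_bigr => a0 _; apply: eq_bigr => b0 _; apply: eq_bigr => A0 _.
apply: eq_bigr => B0 _; congr eta; congr rmu; seteq.
Qed.

Lemma swap4b (A a B b : seq (set T)) :
  Hent (pjoin (pjoin a A) (pjoin b B)) = Hent (pjoin (pjoin a b) (pjoin A B)).
Proof.
rewrite /Defs.Hent !sum_pjoin.
under eq_bigr do under eq_bigr do rewrite sum_pjoin.
under [RHS]eq_bigr do under eq_bigr do rewrite sum_pjoin.
under eq_bigr => a0 _ do rewrite exchange_big.
apply: eq_bigr => a0 _; apply: eq_bigr => b0 _; apply: eq_bigr => A0 _.
apply: eq_bigr => B0 _; congr eta; congr rmu; seteq.
Qed.

Lemma step (A B a b : seq (set T)) (n : nat) (c : R) :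
  good A -> good B -> good a -> good b ->
  Hent (pjoin A B) <= Hent B + n%:R * c ->
  Hent (pjoin a b) - Hent b <= c ->
  Hent (pjoin (pjoin a A) (pjoin b B)) <= Hent (pjoin b B) + n.+1%:R * c.
Proof.
move=> gA gB ga gb IH hc.
rewrite swap4b [Hent (pjoin b B)]Hent_pjoinC.
have s1 := ssa _ _ _ ga gb (pjoin_good _ _ gA gB).
have s2 := ssa _ _ _ gA gB gb.
rewrite [Hent (pjoin b _)]Hent_pjoinC in s1.
rewrite -addn1 natrD mulrDl mul1r.
lra.
Qed.

Lemma core n (F Gf : 'I_n -> seq (set T)) (c : R) :
  (forall i, good (F i)) -> (forall i, good (Gf i)) ->
  (forall i, Hent (pjoin (F i) (Gf i)) - Hent (Gf i) <= c) ->
  Hent (pjoin (BJ F) (BJ Gf)) <= Hent (BJ Gf) + n%:R * c.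
Proof.
elim: n F Gf => [|n IH] F Gf hF hG hc.
  by rewrite /BJ !big_ord0 mul0r addr0 /Defs.Hent sum_pjoin !big_seq1 setIid.
have IH' := IH (fun i => F (lift ord0 i))
  (fun i => Gf (lift ord0 i)) (fun i => hF _) (fun i => hG _)
  (fun i => hc _).
have gA := @BJ_good n _ (fun i => hF (lift ord0 i)).
have gB := @BJ_good n _ (fun i => hG (lift ord0 i)).
rewrite /BJ in IH' gA gB *.
rewrite !big_ord_recl /=.
by apply: step => //; apply: hc.
Qed.

Lemma join_bound n (gs : 'I_n -> G) a b : is_partition a -> is_partition b ->
  Hent (BJ (fun i => ptrans act (gs i) a)) <=
  Hent (BJ (fun i => ptrans act (gs i) b)) + n%:R * Hcond mu a b.
Proof.
move=> pa pb.
have gF : forall i, good (ptrans act (gs i) a).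
  by move=> i; apply: part_good; exact: ptrans_part.
have gG : forall i, good (ptrans act (gs i) b).
  by move=> i; apply: part_good; exact: ptrans_part.
apply: le_trans (mono _ _ (@BJ_good n _ gF) (@BJ_good n _ gG)) _.
apply: core => // i.
rewrite Hent_pjoin_ptrans // Hent_ptrans // Hcond_chain //; exact: part_good.
Qed.

Lemma part_setT : is_partition [:: @setT T].
Proof.
split.
- by case=> // _; exact: measurableT.
- by case=> [|i] [|j] //= /[swap]; rewrite ltnS.
- by rewrite big_seq1.
Qed.

Lemma BJ_setT n (gs : 'I_n -> G) :
  BJ (fun i => ptrans act (gs i) [:: setT]) = [:: setT].
Proof.
elim: n gs => [|n IH] gs; first by rewrite /BJ big_ord0.
have := IH (fun i => gs (lift ord0 i)); rewrite /BJ => IH'.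
by rewrite big_ord_recl /= IH' /ptrans /pjoin /= preimage_setT setIid.
Qed.

Lemma Hent_setT : Hent [:: setT] = 0.
Proof. by rewrite /Defs.Hent big_seq1 rmuT eta1. Qed.

Lemma join_ub n (gs : 'I_n -> G) a : is_partition a ->
  Hent (BJ (fun i => ptrans act (gs i) a)) <= n%:R * Hent a.
Proof.
move=> pa; have := @join_bound n gs _ _ pa part_setT.
rewrite BJ_setT Hent_setT add0r Hcond_chain //; last 2 first.
  exact: part_good. exact: part_good part_setT.
rewrite Hent_setT subr0 /Defs.Hent sum_pjoin.
have e : \sum_(X <- a) \sum_(Y <- [:: setT]) eta (rmu (X `&` Y)) =
  \sum_(A <- a) eta (rmu A) by apply: eq_bigr => X _; rewrite big_seq1 setIT.
by rewrite e.
Qed.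

Variable S : set G.

Definition useq (a : seq (set T)) (n : nat) : R :=
  n%:R^-1 * sup (Hjoins mu act S a n).

Lemma Hjoins_bound a n x : is_partition a -> Hjoins mu act S a n x ->
  0 <= x <= n%:R * Hent a.
Proof.
move=> pa [gs _ <-]; apply/andP; split; last exact: join_ub.
apply: Hent_ge0; apply: (@BJ_good n) => i; apply: part_good.
exact: ptrans_part.
Qed.

Lemma Hjoins_ub a n : is_partition a -> has_ubound (Hjoins mu act S a n).
Proof.
move=> pa; exists (n%:R * Hent a) => x hx.
by have /andP[_ ->] := Hjoins_bound _ _ _ pa hx.
Qed.

Lemma u_bounds a n : is_partition a -> 0 <= useq a n <= Hent a.
Proof.
move=> pa; have Ha := Hent_ge0 _ (part_good _ pa).
case: n => [|n]; first by rewrite /useq invr0 mul0r lexx Ha.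
have [E0|ne] := eqVneq (Hjoins mu act S a n.+1) set0.
  by rewrite /useq E0 sup0 mulr0 lexx Ha.
have ub := Hjoins_ub _ n.+1 pa.
have ne' := (set0P _).1 ne.
have [x hx] := ne'.
have s0 : 0 <= sup (Hjoins mu act S a n.+1).
  apply: le_trans (ub_le_sup ub hx).
  by have /andP[] := Hjoins_bound _ _ _ pa hx.
have s1 : sup (Hjoins mu act S a n.+1) <= n.+1%:R * Hent a.
  apply: ge_sup ne' _ => y hy.
  by have /andP[_ ->] := Hjoins_bound _ _ _ pa hy.
apply/andP; split; first by rewrite /useq mulr_ge0 // invr_ge0 ler0n.
rewrite /useq; apply: le_trans (ler_wpM2l _ s1) _; first by rewrite invr_ge0 ler0n.
by rewrite mulKf // pnatr_eq0.
Qed.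

Lemma u_shift a b n : is_partition a -> is_partition b ->
  useq a n <= useq b n + Hcond mu a b.
Proof.
move=> pa pb; have c0 := Hcond_ge0 _ _ (part_good _ pa) (part_good _ pb).
have /andP[ub0 _] := u_bounds _ n pb.
case: n => [|n] in ub0 *; first by rewrite /useq invr0 !mul0r add0r.
have [E0|ne] := eqVneq (Hjoins mu act S a n.+1) set0.
  by rewrite /useq E0 sup0 mulr0; exact: addr_ge0.
have ub := Hjoins_ub _ n.+1 pb.
have ne' := (set0P _).1 ne.
have s : sup (Hjoins mu act S a n.+1) <=
         sup (Hjoins mu act S b n.+1) + n.+1%:R * Hcond mu a b.
  apply: ge_sup ne' _ => x [gs Sgs <-].
  apply: le_trans (@join_bound _ gs _ _ pa pb) _; rewrite lerD2r.
  by apply: ub_le_sup => //; exists gs.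
rewrite /useq; apply: le_trans (ler_wpM2l _ s) _; first by rewrite invr_ge0 ler0n.
by rewrite mulrDr mulKf // pnatr_eq0.
Qed.

Lemma hstar_shift a b : is_partition a -> is_partition b ->
  hstar mu act S a <= hstar mu act S b + Hcond mu a b.
Proof.
move=> pa pb.
have -> : hstar mu act S a = limn_sup (useq a) by [].
have -> : hstar mu act S b = limn_sup (useq b) by [].
set c := Hcond mu a b.
have bu x : is_partition x -> bounded_fun (useq x).
  move=> px; apply: (@bounded_of _ _ (Hent x)) => n.
  have /andP[h1 h2] := u_bounds _ n px.
  by rewrite ger0_norm.
have bc : bounded_fun (fun _ : nat => c).
  by apply: (@bounded_of _ _ `|c|) => n.
apply: le_trans (@limn_sup_le R _ _ (bu a pa) (bounded_funD (bu b pb) bc)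
  (fun n => u_shift _ _ n pa pb)) _.
apply: le_trans (le_limn_supD (bu b pb) bc) _.
by rewrite limn_sup_cst.
Qed.

End MeasPart.

Theorem lemma4p4 (R : realType) (d : measure_display) (T : measurableType d)
    (mu : probability T R) (G : groupType) (act : G -> T -> T) (S : set G) :
  mp_action mu act ->
  (* continuity of alpha |-> h^*_{mu,S}(alpha) on (P, rho) *)
  (forall a, is_partition a ->
     forall eps : R, 0 < eps -> exists2 delta : R, 0 < delta &
       forall b, is_partition b -> rokhlin mu a b < delta ->
         `|hstar mu act S a - hstar mu act S b| < eps)
  /\
  (* the zero set {alpha : h^*_{mu,S}(alpha) = 0} is rho-closed *)
  (forall a, is_partition a ->
     (forall delta : R, 0 < delta -> exists b, [/\ is_partition b,
        rokhlin mu a b < delta & hstar mu act S b = 0]) ->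
     hstar mu act S a = 0).
Proof.
move=> mp.
have key a b : is_partition a -> is_partition b ->
    `|hstar mu act S a - hstar mu act S b| <= rokhlin mu a b.
  move=> pa pb.
  have h1 := @hstar_shift R d T mu G act mp S a b pa pb.
  have h2 := @hstar_shift R d T mu G act mp S b a pb pa.
  have c1 := @Hcond_ge0 R d T mu a b (@part_good R d T mu a pa) (@part_good R d T mu b pb).
  have c2 := @Hcond_ge0 R d T mu b a (@part_good R d T mu b pb) (@part_good R d T mu a pa).
  rewrite /rokhlin ler_norml; apply/andP; split; lra.
split.
- move=> a pa eps eps0; exists eps => // b pb hr.
  exact: le_lt_trans (key a b pa pb) hr.
- move=> a pa H.
  have [//|hn] := eqVneq (hstar mu act S a) 0.
  have e0 : 0 < `|hstar mu act S a| by rewrite normr_gt0.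
  have [b [pb hr hb]] := H _ e0.
  have := le_lt_trans (key a b pa pb) hr.
  by rewrite hb subr0 ltxx.
Qed.
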